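(* Let $a_c>b_c>0$, $k_e>0$, $a_e^2=a_c^2+k_e$, $b_e^2=b_c^2+k_e$, let $c$ be the ellipse $x^2/a_c^2+y^2/b_c^2=1$ and $e$ the ellipse $x^2/a_e^2+y^2/b_e^2=1$, with center $O$. Let $P_1P_2\dots P_N$ be an $N$-sided periodic billiard in $e$ with caustic $c$ and turning number $\tau$, and let $P_1'P_2'\dots P_N'$ be its conjugate billiard; indices are taken modulo $N$. Then: (i) If $N$ is even and $\tau$ is odd, the billiard is centrally symmetric with respect to $O$ (namely $P_{i+N/2}$ is the reflection of $P_i$ in $O$). (ii) If $N=2n+1$ is odd and $\tau$ is odd, the billiard is centrally symmetric with respect to $O$ to its conjugate billiard, with $P_i$ corresponding to $P'_{i+n}$, i.e. $P'_{i+n}=-P_i$ for all $i$. (iii) If $N=2n+1$ is odd and $\tau$ is even, the conjugate billiard coincides with the original one, and $P_i=P'_{i+n}$ for all $i$.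
   Context: A billiard in $e$ with caustic $c$ is a sequence $(P_i)_{i\in\mathbb Z}$ of points of $e$ with $P_{i+1}\neq P_i$ such that every line $[P_i,P_{i+1}]$ is tangent to $c$ and $[P_{i-1},P_i]\neq[P_i,P_{i+1}]$; it is $N$-sided periodic if $P_{i+N}=P_i$ for all $i$, $N$ being the least such positive integer. The vertices are traversed counterclockwise. Let $Q_i$ be the contact point of $[P_i,P_{i+1}]$ with $c$. With $\alpha(x,y)=(\frac{a_e}{a_c}x,\frac{b_e}{b_c}y)$ (so $\alpha(c)=e$), the conjugate billiard is the billiard in $e$ with caustic $c$ with vertices $P_i'=\alpha(Q_i)$. The signed exterior angle $\theta_i$ at $P_i$ is the signed angle from the direction of $P_{i-1}P_i$ to the direction of $P_iP_{i+1}$; for a periodic billiard $\sum_{i=1}^N\theta_i=2\tau\pi$ with $\tau\in\mathbb N$, called the turning number (the number of loops around $O$). *)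

(* Defs.v *)
From Stdlib Require Import Reals Lra ZArith.
Open Scope R_scope.

Definition pt := (R * R)%type.

Definition padd (A B : pt) : pt := (fst A + fst B, snd A + snd B).
Definition psub (A B : pt) : pt := (fst A - fst B, snd A - snd B).
Definition popp (A : pt) : pt := (- fst A, - snd A).
Definition pscale (t : R) (A : pt) : pt := (t * fst A, t * snd A).
Definition dot (u v : pt) : R := fst u * fst v + snd u * snd v.
Definition cross (u v : pt) : R := fst u * snd v - snd u * fst v.
Definition pnorm (u : pt) : R := sqrt (dot u u).

Definition on_ellipse (a b : R) (X : pt) : Prop :=
  (fst X)^2 / a^2 + (snd X)^2 / b^2 = 1.

Definition line (A B : pt) (X : pt) : Prop :=
  exists t : R, X = padd A (pscale t (psub B A)).

(* Q is the contact point of the line [A,B] with the ellipse x^2/a^2+y^2/b^2=1: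
   Q lies on the ellipse and on the line, and the line is tangent there
   (its direction is orthogonal to the normal (x/a^2, y/b^2) at Q). *)
Definition contact_point (a b : R) (A B Q : pt) : Prop :=
  on_ellipse a b Q /\ line A B Q /\
  dot (psub B A) (fst Q / a^2, snd Q / b^2) = 0.

Definition tangent_line (a b : R) (A B : pt) : Prop :=
  exists Q, contact_point a b A B Q.

Definition billiard (ae be ac bc : R) (P : Z -> pt) : Prop :=
  forall i : Z,
    on_ellipse ae be (P i) /\
    P (i + 1)%Z <> P i /\
    tangent_line ac bc (P i) (P (i + 1)%Z) /\
    ~ (forall X, line (P (i - 1)%Z) (P i) X <-> line (P i) (P (i + 1)%Z) X).

Definition periodic_with (P : Z -> pt) (N : nat) : Prop :=
  forall i : Z, P (i + Z.of_nat N)%Z = P i.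

Definition least_period (P : Z -> pt) (N : nat) : Prop :=
  (0 < N)%nat /\ periodic_with P N /\
  forall m : nat, (0 < m < N)%nat -> ~ periodic_with P m.

Definition signed_angle (u v : pt) (theta : R) : Prop :=
  - PI < theta <= PI /\
  cos theta * (pnorm u * pnorm v) = dot u v /\
  sin theta * (pnorm u * pnorm v) = cross u v.

Definition exterior_angles (P : Z -> pt) (theta : Z -> R) : Prop :=
  forall i : Z,
    signed_angle (psub (P i) (P (i - 1)%Z)) (psub (P (i + 1)%Z) (P i)) (theta i).

(* Turning number tau (counterclockwise traversal, tau a natural number):
   sum_{i=1}^N theta_i = 2 tau pi. *)
Definition turning_number (P : Z -> pt) (N : nat) (tau : nat) : Prop :=
  exists theta : Z -> R,
    exterior_angles P theta /\
    sum_f_R0 (fun k => theta (Z.of_nat k + 1)%Z) (N - 1) = 2 * INR tau * PI.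

(* The affine map alpha(x,y) = (ae/ac x, be/bc y) sending c onto e. *)
Definition alpha (ae be ac bc : R) (X : pt) : pt :=
  (ae / ac * fst X, be / bc * snd X).

(* Main.v *)
Require Import Defs.
From Stdlib Require Import Reals ZArith Arith Lra Lia Psatz.
Open Scope R_scope.

Lemma cos_Zper : forall x (k : Z), cos (x + 2 * IZR k * PI) = cos x.
Proof.
  intros x k. destruct (Z_le_gt_dec 0 k) as [H|H].
  - rewrite <- (Z2Nat.id k H), <- INR_IZR_INZ. apply cos_period.
  - assert (Hk : k = (- Z.of_nat (Z.to_nat (- k)))%Z) by lia.
    rewrite Hk, opp_IZR, <- INR_IZR_INZ.
    set (n := Z.to_nat (-k)).
    rewrite <- (cos_period (x + 2 * - INR n * PI) n). f_equal. ring.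
Qed.

Lemma sin_Zper : forall x (k : Z), sin (x + 2 * IZR k * PI) = sin x.
Proof.
  intros x k. destruct (Z_le_gt_dec 0 k) as [H|H].
  - rewrite <- (Z2Nat.id k H), <- INR_IZR_INZ. apply sin_period.
  - assert (Hk : k = (- Z.of_nat (Z.to_nat (- k)))%Z) by lia.
    rewrite Hk, opp_IZR, <- INR_IZR_INZ.
    set (n := Z.to_nat (-k)).
    rewrite <- (sin_period (x + 2 * - INR n * PI) n). f_equal. ring.
Qed.

Definition red (a : R) : R := 2 * PI * frac_part (a / (2 * PI)).

Lemma red_spec : forall a, exists k : Z, red a = a + 2 * IZR k * PI /\ 0 <= red a < 2 * PI.
Proof.
  intros a. unfold red.
  pose proof PI_RGT_0 as Hpi.
  pose proof (Rplus_Int_part_frac_part (a / (2 * PI))) as E.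
  assert (F : 0 <= frac_part (a / (2*PI)) < 1).
  { unfold frac_part. pose proof (base_Int_part (a / (2*PI))). lra. }
  exists (- Int_part (a / (2 * PI)))%Z. rewrite opp_IZR. split.
  - set (f := frac_part (a / (2 * PI))) in *. set (I := IZR (Int_part (a / (2 * PI)))) in *.
    assert (a = 2 * PI * (a / (2 * PI))) by (field; lra).
    rewrite E in H. lra.
  - split; nra.
Qed.

Lemma sin_pos_range : forall y, 0 <= y < 2 * PI -> sin y > 0 -> 0 < y < PI.
Proof.
  intros y [H1 H2] H. pose proof PI_RGT_0.
  destruct (Rlt_or_le y PI) as [L|L].
  - split; [|lra]. destruct (Req_dec y 0) as [E|E]; [subst; rewrite sin_0 in H; lra| lra].
  - exfalso. assert (sin y = - sin (y - PI)).
    { replace y with ((y - PI) + PI) at 1 by ring. apply neg_sin. }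
    assert (0 <= sin (y - PI)) by (apply sin_ge_0; lra). lra.
Qed.

Lemma rep_pos : forall a b, sin (a - b) > 0 ->
  exists a', cos a' = cos a /\ sin a' = sin a /\ b < a' < b + PI.
Proof.
  intros a b H. destruct (red_spec (a - b)) as [k [E R]].
  exists (b + red (a - b)).
  assert (Hs : sin (red (a - b)) = sin (a - b)) by (rewrite E; apply sin_Zper).
  assert (Hr : 0 < red (a - b) < PI) by (apply sin_pos_range; [exact R| lra]).
  rewrite E in Hr |- *. replace (b + (a - b + 2 * IZR k * PI)) with (a + 2 * IZR k * PI) by ring.
  rewrite cos_Zper, sin_Zper. split; [auto|split;[auto|]]. lra.
Qed.

Lemma rep_neg : forall a b, sin (a - b) < 0 ->
  exists a', cos a' = cos a /\ sin a' = sin a /\ b - PI < a' < b.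
Proof.
  intros a b H. destruct (rep_pos a (b - PI)) as [a' [H1 [H2 H3]]].
  - replace (a - (b - PI)) with ((a - b) + PI) by ring. rewrite neg_sin. lra.
  - exists a'. repeat split; auto; lra.
Qed.

Lemma ang_eq : forall a b, - PI < a <= PI -> - PI < b <= PI ->
  cos a = cos b -> sin a = sin b -> a = b.
Proof.
  intros a b Ha Hb Hc Hs.
  assert (C : cos (a - b) = 1).
  { rewrite cos_minus, Hc, Hs. pose proof (sin2_cos2 b). unfold Rsqr in H. lra. }
  assert (S : sin ((a - b)/2) = 0).
  { assert (cos (a - b) = 1 - 2 * sin ((a-b)/2) ^ 2).
    { replace (a - b) with (2 * ((a - b)/2)) at 1 by field. rewrite cos_2a_sin. ring. }
    nra. }
  destruct (sin_eq_0_0 _ S) as [k Hk].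
  pose proof PI_RGT_0.
  assert (-1 < IZR k < 1).
  { split.
    - apply (Rmult_lt_reg_r PI); [lra|]. nra.
    - apply (Rmult_lt_reg_r PI); [lra|]. nra. }
  assert (k = 0%Z). { destruct H0 as [H1 H2]. apply lt_IZR in H1. apply lt_IZR in H2. lia. }
  subst k. simpl in Hk. lra.
Qed.

Lemma interp : forall p q u v w,
  (p * cos v + q * sin v) * sin (w - u) =
  (p * cos u + q * sin u) * sin (w - v) + (p * cos w + q * sin w) * sin (v - u).
Proof. intros. rewrite !sin_minus. ring. Qed.

Definition FF (A B a b : R) := A * cos a * cos b + B * sin a * sin b.

Lemma FF_sym : forall A B a b, FF A B a b = FF A B b a.
Proof. intros; unfold FF; ring. Qed.

Lemma FF_diag : forall A B a, A > 1 -> B > 1 -> FF A B a a > 1.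
Proof. intros A B a HA HB. unfold FF. pose proof (sin2_cos2 a) as E. unfold Rsqr in E.
  assert (0 <= cos a * cos a) by nra. assert (0 <= sin a * sin a) by nra.
  destruct (Rle_or_lt (A - 1) (B - 1)).
  - assert ((B - 1) * (sin a * sin a) >= (A - 1) * (sin a * sin a)) by nra.
    assert ((A - 1) * (cos a * cos a + sin a * sin a) > 0) by (rewrite Rplus_comm, E; lra). nra.
  - assert ((A - 1) * (cos a * cos a) >= (B - 1) * (cos a * cos a)) by nra.
    assert ((B - 1) * (cos a * cos a + sin a * sin a) > 0) by (rewrite Rplus_comm, E; lra). nra.
Qed.

Lemma FF_shiftPI : forall A B a b, FF A B (a + PI) b = - FF A B a b.
Proof. intros. unfold FF. rewrite neg_cos, neg_sin. ring. Qed.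

Lemma between : forall A B t u v w, u < v -> v < w -> w - u < PI ->
  FF A B t u >= 1 -> FF A B t w >= 1 -> (FF A B t u > 1 \/ FF A B t w > 1) ->
  FF A B t v > 1.
Proof.
  intros A B t u v w H1 H2 H3 Hu Hw Hor.
  pose proof (interp (A * cos t) (B * sin t) u v w) as I.
  assert (EF : forall s, FF A B t s = A * cos t * cos s + B * sin t * sin s) by (intros; unfold FF; ring).
  rewrite <- !EF in I. rewrite EF in Hu, Hw, Hor.
  assert (s1 : sin (w - u) > 0) by (apply sin_gt_0; lra).
  assert (s2 : sin (w - v) > 0) by (apply sin_gt_0; lra).
  assert (s3 : sin (v - u) > 0) by (apply sin_gt_0; lra).
  assert (sin (w - u) <= sin (w - v) + sin (v - u)).
  { replace (w - u) with ((w - v) + (v - u)) by ring. rewrite sin_plus.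
    pose proof (COS_bound (w - v)). pose proof (COS_bound (v - u)). nra. }
  rewrite <- !EF in Hu, Hw, Hor.
  destruct Hor; nra.
Qed.

Lemma same_side : forall A B t s1 s2, A > 1 -> B > 1 ->
  FF A B t s1 = 1 -> FF A B t s2 = 1 -> t < s1 < t + PI -> t < s2 < t + PI -> s1 = s2.
Proof.
  intros A B t s1 s2 HA HB E1 E2 R1 R2.
  pose proof (FF_diag A B t HA HB).
  destruct (Rtotal_order s1 s2) as [L|[L|L]]; auto; exfalso.
  - assert (FF A B t s1 > 1) by (apply (between A B t t s1 s2); lra). lra.
  - assert (FF A B t s2 > 1) by (apply (between A B t t s2 s1); lra). lra.
Qed.

Lemma FF_neg : forall A B a b, FF A B (-a) (-b) = FF A B a b.
Proof. intros; unfold FF; rewrite !cos_neg, !sin_neg; ring. Qed.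

Lemma same_side_neg : forall A B t s1 s2, A > 1 -> B > 1 ->
  FF A B t s1 = 1 -> FF A B t s2 = 1 -> t - PI < s1 < t -> t - PI < s2 < t -> s1 = s2.
Proof.
  intros. assert (- s1 = - s2); [|lra].
  apply (same_side A B (-t)); auto; try rewrite FF_neg; auto; lra.
Qed.

Lemma two_step : forall A B a b c, A > 1 -> B > 1 ->
  FF A B a b = 1 -> FF A B b c = 1 -> a < b < a + PI -> b < c < b + PI -> c < a + PI.
Proof.
  intros A B a b c HA HB E1 E2 R1 R2.
  destruct (Rlt_or_le c (a + PI)) as [L|L]; auto. exfalso.
  pose proof (FF_diag A B b HA HB).
  assert (Ea : FF A B b (a + PI) = -1).
  { rewrite FF_sym, FF_shiftPI, E1. ring. }
  destruct (Req_dec c (a + PI)) as [E|E].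
  - subst c. lra.
  - assert (FF A B b (a + PI) > 1) by (apply (between A B b b (a+PI) c); lra). lra.
Qed.

Lemma mono : forall A B x x' y y', A > 1 -> B > 1 ->
  FF A B x x' = 1 -> x < x' < x + PI -> FF A B y y' = 1 -> y < y' < y + PI ->
  x < y -> x' < y'.
Proof.
  intros A B x x' y y' HA HB E1 R1 E2 R2 L.
  destruct (Rlt_or_le y x') as [L2|L2]; [|lra].
  assert (G1 : FF A B x' y > 1).
  { apply (between A B x' x y x'); try lra.
    - rewrite FF_sym; lra.
    - pose proof (FF_diag A B x' HA HB); lra.
    - right. apply FF_diag; auto. }
  destruct (Rlt_or_le x' y') as [L3|L3]; auto. exfalso.
  destruct (Req_dec y' x') as [E|E].
  - subst. rewrite FF_sym in G1. lra.
  - assert (FF A B y y' > 1).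
    { apply (between A B y y y' x'); try lra.
      - pose proof (FF_diag A B y HA HB); lra.
      - rewrite FF_sym; lra.
      - left. apply FF_diag; auto. }
    lra.
Qed.

Lemma FF_sin_nz : forall A B a b, A > 1 -> B > 1 -> FF A B a b = 1 -> sin (b - a) <> 0.
Proof.
  intros A B a b HA HB E S.
  assert (C2 : cos (b - a) * cos (b - a) = 1).
  { pose proof (sin2_cos2 (b - a)). unfold Rsqr in H. rewrite S in H. lra. }
  assert (Hc : cos b = cos (b - a) * cos a).
  { replace b with ((b - a) + a) at 1 by ring. rewrite cos_plus, S. ring. }
  assert (Hs : sin b = cos (b - a) * sin a).
  { replace b with ((b - a) + a) at 1 by ring. rewrite sin_plus, S. ring. }
  pose proof (FF_diag A B a HA HB) as D.
  unfold FF in E, D. rewrite Hc, Hs in E.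
  set (c := cos (b - a)) in *. set (K := A * cos a * cos a + B * sin a * sin a) in *.
  assert (c * K = 1) by (unfold K; rewrite <- E; ring).
  nra.
Qed.

Lemma FF_ext : forall A B a b a' b', cos a = cos a' -> sin a = sin a' -> cos b = cos b' -> sin b = sin b' ->
  FF A B a b = FF A B a' b'.
Proof. intros. unfold FF. rewrite H, H0, H1, H2. auto. Qed.

Lemma sin_diff_ext : forall a b a' b', cos a = cos a' -> sin a = sin a' -> cos b = cos b' -> sin b = sin b' ->
  sin (b - a) = sin (b' - a').
Proof. intros. rewrite !sin_minus, H, H0, H1, H2. auto. Qed.

Lemma propagate : forall A B (z : nat -> R), A > 1 -> B > 1 ->
  (forall k, FF A B (z k) (z (S k)) = 1) ->
  (forall k, ~ (cos (z k) = cos (z (S (S k))) /\ sin (z k) = sin (z (S (S k))))) ->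
  sin (z 1%nat - z 0%nat) > 0 -> forall k, sin (z (S k) - z k) > 0.
Proof.
  intros A B z HA HB C1 C2 H0 k. induction k as [|k IH]; auto.
  set (a := z k) in *. set (b := z (S k)) in *. set (c := z (S (S k))) in *.
  assert (Nz : sin (c - b) <> 0) by (apply (FF_sin_nz A B); auto; apply C1).
  destruct (Rtotal_order (sin (c - b)) 0) as [L|[L|L]]; [|contradiction|exact L].
  exfalso.
  assert (La : sin (a - b) < 0).
  { replace (a - b) with (- (b - a)) by ring. rewrite sin_neg. lra. }
  destruct (rep_neg a b La) as [a' [Ca [Sa Ra]]].
  destruct (rep_neg c b L) as [c' [Cc [Sc Rc]]].
  assert (a' = c').
  { apply (same_side_neg A B b); auto.
    - rewrite <- (C1 k). fold a b. rewrite FF_sym. apply FF_ext; auto.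
    - rewrite <- (C1 (S k)). fold b c. apply FF_ext; auto. }
  subst c'. apply (C2 k). fold a c. split; congruence.
Qed.

Fixpoint lift (z : nat -> R) (k : nat) : R :=
  match k with
  | O => z O
  | S k' => lift z k' + red (z (S k') - lift z k')
  end.

Lemma lift_cong : forall z k, cos (lift z k) = cos (z k) /\ sin (lift z k) = sin (z k).
Proof.
  intros z k. destruct k as [|k]; simpl; [auto|].
  destruct (red_spec (z (S k) - lift z k)) as [j [E _]]. rewrite E.
  replace (lift z k + (z (S k) - lift z k + 2 * IZR j * PI)) with (z (S k) + 2 * IZR j * PI) by ring.
  rewrite cos_Zper, sin_Zper. auto.
Qed.

Lemma lift_step : forall z, (forall k, sin (z (S k) - z k) > 0) ->
  forall k, lift z k < lift z (S k) < lift z k + PI.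
Proof.
  intros z Hp k. simpl.
  destruct (red_spec (z (S k) - lift z k)) as [j [E R]].
  assert (sin (red (z (S k) - lift z k)) > 0).
  { rewrite E, sin_Zper. destruct (lift_cong z k) as [c s].
    rewrite (sin_diff_ext (lift z k) (z (S k)) (z k) (z (S k))); auto. }
  pose proof (sin_pos_range _ R H). lra.
Qed.

Lemma lift_FF : forall A B z, (forall k, FF A B (z k) (z (S k)) = 1) ->
  forall k, FF A B (lift z k) (lift z (S k)) = 1.
Proof.
  intros. destruct (lift_cong z k), (lift_cong z (S k)).
  rewrite <- (H k). apply FF_ext; auto.
Qed.

Lemma lift_two : forall A B z, A > 1 -> B > 1 -> (forall k, FF A B (z k) (z (S k)) = 1) ->
  (forall k, sin (z (S k) - z k) > 0) ->
  forall k, lift z (S (S k)) < lift z k + PI.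
Proof.
  intros A B z HA HB C1 Hp k.
  apply (two_step A B _ (lift z (S k))); auto; try apply lift_FF; auto; apply lift_step; auto.
Qed.

Lemma half : forall A B (w : nat -> R) (M : nat) c, A > 1 -> B > 1 ->
  (forall k, FF A B (w k) (w (S k)) = 1) ->
  (forall k, w k < w (S k) < w k + PI) ->
  (forall a b, FF A B (a - c) (b - c) = FF A B a b) ->
  w (2 * M)%nat = w O + 2 * c -> w M = w O + c.
Proof.
  intros A B w M c HA HB C1 St Sh Per.
  set (y := fun k => w (k + M)%nat - c).
  assert (Cy : forall k, FF A B (y k) (y (S k)) = 1).
  { intros k. unfold y. rewrite Sh. replace (S k + M)%nat with (S (k + M)) by lia. apply C1. }
  assert (Sy : forall k, y k < y (S k) < y k + PI).
  { intros k. unfold y. replace (S k + M)%nat with (S (k + M)) by lia.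
    specialize (St (k + M)%nat). lra. }
  assert (yM : y M = w O + c).
  { unfold y. replace (M + M)%nat with (2 * M)%nat by lia. rewrite Per. ring. }
  assert (y0 : y O = w M - c) by (unfold y; simpl; auto).
  destruct (Rtotal_order (w O) (y O)) as [L|[L|L]].
  - assert (forall k, w k < y k).
    { induction k; auto. apply (mono A B (w k) (w (S k)) (y k) (y (S k))); auto. }
    specialize (H M). lra.
  - lra.
  - assert (forall k, y k < w k).
    { induction k; auto. apply (mono A B (y k) (y (S k)) (w k) (w (S k))); auto. }
    specialize (H M). lra.
Qed.

Lemma step_unique : forall a b d d', cos a = cos b -> sin a = sin b ->
  cos (a + d) = cos (b + d') -> sin (a + d) = sin (b + d') -> 0 < d < PI -> 0 < d' < PI -> d = d'.
Proof.
  intros a b d d' Ca Sa Cd Sd Rd Rd'.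
  assert (cos d = cos d').
  { replace d with ((a + d) - a) by ring. replace d' with ((b + d') - b) by ring.
    rewrite !cos_minus, Cd, Sd, Ca, Sa. auto. }
  assert (sin d = sin d').
  { replace d with ((a + d) - a) by ring. replace d' with ((b + d') - b) by ring.
    rewrite !sin_minus, Cd, Sd, Ca, Sa. auto. }
  apply ang_eq; auto; lra.
Qed.

Lemma lift_per : forall z p, (forall k, sin (z (S k) - z k) > 0) -> (forall k, z (k + p)%nat = z k) ->
  forall k, lift z (k + p) = lift z k + (lift z p - lift z O).
Proof.
  intros z p Hp Per k. induction k as [|k IH]; [simpl; ring|].
  replace (S k + p)%nat with (S (k + p)) by lia.
  assert (E : forall m, lift z (S m) = lift z m + (lift z (S m) - lift z m)) by (intros; ring).
  rewrite (E (k + p)%nat), (E k).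
  assert (lift z (S (k + p)) - lift z (k + p) = lift z (S k) - lift z k).
  { destruct (lift_cong z (k + p)) as [c1 s1]. destruct (lift_cong z k) as [c2 s2].
    destruct (lift_cong z (S (k + p))) as [c3 s3]. destruct (lift_cong z (S k)) as [c4 s4].
    pose proof (lift_step z Hp (k + p)). pose proof (lift_step z Hp k).
    apply (step_unique (lift z (k + p)) (lift z k)).
    - rewrite c1, c2, Per; auto.
    - rewrite s1, s2, Per; auto.
    - replace (lift z (k + p) + _) with (lift z (S (k + p))) by ring.
      replace (lift z k + _) with (lift z (S k)) by ring.
      rewrite c3, c4. replace (S (k + p)) with (S k + p)%nat by lia. rewrite Per; auto.
    - replace (lift z (k + p) + _) with (lift z (S (k + p))) by ring.
      replace (lift z k + _) with (lift z (S k)) by ring.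
      rewrite s3, s4. replace (S (k + p)) with (S k + p)%nat by lia. rewrite Per; auto.
    - lra.
    - lra. }
  rewrite H, IH. ring.
Qed.

Lemma cos_minus_PI : forall a, cos (a - PI) = - cos a.
Proof. intros. replace a with ((a - PI) + PI) at 2 by ring. rewrite neg_cos. ring. Qed.
Lemma sin_minus_PI : forall a, sin (a - PI) = - sin a.
Proof. intros. replace a with ((a - PI) + PI) at 2 by ring. rewrite neg_sin. ring. Qed.

Lemma FF_shift_nat : forall A B a b n, FF A B (a - PI * INR n) (b - PI * INR n) = FF A B a b.
Proof.
  intros A B a b n. induction n as [|n IH].
  - simpl. rewrite !Rmult_0_r, !Rminus_0_r. auto.
  - rewrite S_INR. unfold FF in *.
    replace (a - PI * (INR n + 1)) with ((a - PI * INR n) - PI) by ring.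
    replace (b - PI * (INR n + 1)) with ((b - PI * INR n) - PI) by ring.
    rewrite !cos_minus_PI, !sin_minus_PI. rewrite <- IH. ring.
Qed.

Lemma cs_odd : forall a n, Nat.Odd n -> cos (a + PI * INR n) = - cos a /\ sin (a + PI * INR n) = - sin a.
Proof.
  intros a n [j Hj]. subst n. rewrite plus_INR, mult_INR. replace (INR 2) with 2 by (simpl; ring). replace (INR 1) with 1 by (simpl; ring).
  replace (a + PI * (2 * INR j + 1)) with ((a + PI) + 2 * INR j * PI) by ring.
  rewrite cos_period, sin_period, neg_cos, neg_sin. auto.
Qed.

Lemma cs_even : forall a n, Nat.Even n -> cos (a + PI * INR n) = cos a /\ sin (a + PI * INR n) = sin a.
Proof.
  intros a n [j Hj]. subst n. rewrite mult_INR. replace (INR 2) with 2 by (simpl; ring).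
  replace (a + PI * (2 * INR j)) with (a + 2 * INR j * PI) by ring.
  rewrite cos_period, sin_period. auto.
Qed.

Lemma NNPP_free : forall x : R, ~ x <> 0 -> x = 0.
Proof. intros x H. destruct (Req_dec x 0); tauto. Qed.

Definition angle_of (u v : R) : R := if Rle_dec 0 v then acos u else - acos u.

Lemma angle_of_spec : forall u v, u * u + v * v = 1 ->
  cos (angle_of u v) = u /\ sin (angle_of u v) = v.
Proof.
  intros u v H. assert (Hu : -1 <= u <= 1) by (split; nra).
  assert (Hs : sqrt (1 - u²) = Rabs v).
  { replace (1 - u²) with (v * v) by (unfold Rsqr; lra). apply sqrt_Rsqr_abs. }
  unfold angle_of. destruct (Rle_dec 0 v).
  - rewrite cos_acos, sin_acos, Hs, Rabs_right; auto; lra.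
  - rewrite cos_neg, sin_neg, cos_acos, sin_acos, Hs, Rabs_left; auto; lra.
Qed.

Lemma ell_param : forall a b X, a > 0 -> b > 0 -> on_ellipse a b X ->
  let th := angle_of (fst X / a) (snd X / b) in
  X = (a * cos th, b * sin th).
Proof.
  intros a b [x y] Ha Hb H th. unfold on_ellipse in H. cbn [fst snd] in *.
  assert (E : (x / a) * (x / a) + (y / b) * (y / b) = 1).
  { rewrite <- H. field. lra. }
  destruct (angle_of_spec _ _ E) as [c s]. fold th in c, s. rewrite c, s.
  f_equal; field; lra.
Qed.

Definition nrm (a b : R) (Q : pt) : pt := (fst Q / a ^ 2, snd Q / b ^ 2).

Lemma contact_dot : forall a b A B Q, a > 0 -> b > 0 -> contact_point a b A B Q ->
  dot A (nrm a b Q) = 1 /\ dot B (nrm a b Q) = 1.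
Proof.
  intros a b [ax ay] [bx by'] [qx qy] Ha Hb [Hon [[t Ht] Hd]].
  unfold on_ellipse, dot, nrm, psub, padd, pscale in *. cbn [fst snd] in *.
  injection Ht as E1 E2.
  assert (Hq : qx * (qx / a ^ 2) + qy * (qy / b ^ 2) = 1).
  { rewrite <- Hon. field. lra. }
  split.
  - replace (ax * (qx / a ^ 2) + ay * (qy / b ^ 2)) with
      (qx * (qx / a ^ 2) + qy * (qy / b ^ 2) - t * ((bx - ax) * (qx / a ^ 2) + (by' - ay) * (qy / b ^ 2))).
    + rewrite Hd, Hq. ring.
    + rewrite E1, E2. ring.
  - replace (bx * (qx / a ^ 2) + by' * (qy / b ^ 2)) with
      (qx * (qx / a ^ 2) + qy * (qy / b ^ 2) + (1 - t) * ((bx - ax) * (qx / a ^ 2) + (by' - ay) * (qy / b ^ 2))).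
    + rewrite Hd, Hq. ring.
    + rewrite E1, E2. ring.
Qed.

Lemma contact_unique : forall a b A B Q1 Q2, a > 0 -> b > 0 ->
  contact_point a b A B Q1 -> contact_point a b A B Q2 -> Q1 = Q2.
Proof.
  intros a b [ax ay] [bx by'] [px py] [qx qy] Ha Hb [On1 [[t1 L1] D1]] [On2 [[t2 L2] D2]].
  unfold on_ellipse, dot, nrm, psub, padd, pscale in *. cbn [fst snd] in *.
  injection L1 as E1 E2. injection L2 as E3 E4.
  assert (K : qx * (px / a ^ 2) + qy * (py / b ^ 2) = 1).
  { replace (qx * (px / a ^ 2) + qy * (py / b ^ 2)) with
      (px * (px / a ^ 2) + py * (py / b ^ 2) + (t2 - t1) * ((bx - ax) * (px / a ^ 2) + (by' - ay) * (py / b ^ 2))).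
    - rewrite D1. rewrite <- On1. field. lra.
    - rewrite E1, E2, E3, E4. ring. }
  assert (Z : (qx / a - px / a) ^ 2 + (qy / b - py / b) ^ 2 = 0).
  { replace ((qx / a - px / a) ^ 2 + (qy / b - py / b) ^ 2) with
      ((px ^ 2 / a ^ 2 + py ^ 2 / b ^ 2) + (qx ^ 2 / a ^ 2 + qy ^ 2 / b ^ 2)
        - 2 * (qx * (px / a ^ 2) + qy * (py / b ^ 2))) by (field; lra).
    rewrite On1, On2, K. ring. }
  pose proof (pow2_ge_0 (qx / a - px / a)). pose proof (pow2_ge_0 (qy / b - py / b)).
  assert (qx / a - px / a = 0) by (apply NNPP_free; intro Hz; apply (pow_nonzero _ 2) in Hz; lra).
  assert (qy / b - py / b = 0) by (apply NNPP_free; intro Hz; apply (pow_nonzero _ 2) in Hz; lra).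
  assert (qx = px).
  { apply (Rmult_eq_reg_r (/ a)); [unfold Rdiv in *; lra| apply Rinv_neq_0_compat; lra]. }
  assert (qy = py).
  { apply (Rmult_eq_reg_r (/ b)); [unfold Rdiv in *; lra| apply Rinv_neq_0_compat; lra]. }
  f_equal; congruence.
Qed.

Lemma line_eq : forall A B n X, A <> B -> dot A n = 1 -> dot B n = 1 -> n <> (0, 0) ->
  (line A B X <-> dot X n = 1).
Proof.
  intros [ax ay] [bx by'] [nx ny] [x y] Hne HA HB Hn. unfold line, dot, padd, psub, pscale in *. cbn [fst snd] in *.
  split.
  - intros [t Ht]. injection Ht as E1 E2. subst.
    replace ((ax + t * (bx - ax)) * nx + (ay + t * (by' - ay)) * ny)
      with (ax * nx + ay * ny + t * ((bx * nx + by' * ny) - (ax * nx + ay * ny))) by ring.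
    rewrite HA, HB. ring.
  - intros HX.
    assert (Hd : (bx - ax) ^ 2 + (by' - ay) ^ 2 <> 0).
    { intro Z. apply Hne. pose proof (pow2_ge_0 (bx - ax)). pose proof (pow2_ge_0 (by' - ay)).
      assert (bx - ax = 0) by (apply NNPP_free; intro Hz; apply (pow_nonzero _ 2) in Hz; lra).
      assert (by' - ay = 0) by (apply NNPP_free; intro Hz; apply (pow_nonzero _ 2) in Hz; lra).
      f_equal; lra. }
    assert (Ex : (bx - ax) * nx + (by' - ay) * ny = 0) by lra.
    assert (Ew : (x - ax) * nx + (y - ay) * ny = 0) by lra.
    assert (Cr : (bx - ax) * (y - ay) - (by' - ay) * (x - ax) = 0).
    { destruct (Req_dec nx 0) as [Z|Z].
      - assert (ny <> 0). { intro. apply Hn. subst. auto. }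
        subst nx.
        assert (by' - ay = 0) by (apply (Rmult_eq_reg_r ny); lra).
        assert (y - ay = 0) by (apply (Rmult_eq_reg_r ny); lra).
        rewrite H0, H1. ring.
      - apply (Rmult_eq_reg_r nx); [|auto]. rewrite Rmult_0_l.
        replace (((bx - ax) * (y - ay) - (by' - ay) * (x - ax)) * nx) with
          ((y - ay) * ((bx - ax) * nx + (by' - ay) * ny) - (by' - ay) * ((x - ax) * nx + (y - ay) * ny)) by ring.
        rewrite Ex, Ew. ring. }
    exists (((x - ax) * (bx - ax) + (y - ay) * (by' - ay)) / ((bx - ax) ^ 2 + (by' - ay) ^ 2)).
    f_equal.
    + apply (Rmult_eq_reg_r ((bx - ax) ^ 2 + (by' - ay) ^ 2)); [|auto].
      field_simplify; [|auto]. pose proof (f_equal (Rmult (by' - ay)) Cr) as HH. ring_simplify in HH. lra.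
    + apply (Rmult_eq_reg_r ((bx - ax) ^ 2 + (by' - ay) ^ 2)); [|auto].
      field_simplify; [|auto]. pose proof (f_equal (Rmult (bx - ax)) Cr) as HH. ring_simplify in HH. lra.
Qed.

Definition Tv (ac bc s : R) : pt := (- ac * sin s, bc * cos s).
Definition gg (ac bc u : R) : R := (ac - bc) * sin u * cos u / (bc * cos u ^ 2 + ac * sin u ^ 2).
Definition Psi (ac bc u : R) : R := PI / 2 + u + atan (gg ac bc u).

Lemma sqrt_sq_eq : forall a b, 0 <= a -> 0 <= b -> a * a = b * b -> a = b.
Proof. intros. nra. Qed.

Lemma pnorm_Tv_pos : forall ac bc u, ac > 0 -> bc > 0 -> pnorm (Tv ac bc u) > 0.
Proof.
  intros. unfold pnorm, dot, Tv. cbn [fst snd]. apply sqrt_lt_R0.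
  pose proof (sin2_cos2 u). unfold Rsqr in H1.
  assert (0 <= sin u * sin u) by nra. assert (0 <= cos u * cos u) by nra.
  destruct (Rle_or_lt (sin u * sin u) (1/2)); nra.
Qed.

Lemma Psi_cs : forall ac bc u, ac > 0 -> bc > 0 ->
  cos (Psi ac bc u) * pnorm (Tv ac bc u) = - ac * sin u /\
  sin (Psi ac bc u) * pnorm (Tv ac bc u) = bc * cos u.
Proof.
  intros ac bc u Ha Hb.
  pose proof (sin2_cos2 u) as SC. unfold Rsqr in SC.
  set (s := sin u) in *. set (c := cos u) in *.
  set (D := bc * c ^ 2 + ac * s ^ 2).
  assert (HD : D > 0).
  { unfold D. assert (0 <= s * s) by nra. assert (0 <= c * c) by nra.
    destruct (Rle_or_lt (s * s) (1/2)); nra. }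
  set (g := gg ac bc u).
  assert (Hg : g = (ac - bc) * s * c / D) by reflexivity.
  assert (Hsq : sqrt (1 + g²) * D = pnorm (Tv ac bc u)).
  { unfold pnorm, dot, Tv. cbn [fst snd]. fold s c.
    apply sqrt_sq_eq.
    - apply Rmult_le_pos; [apply sqrt_pos| lra].
    - apply sqrt_pos.
    - assert (0 <= 1 + g²) by (pose proof (Rle_0_sqr g); lra).
      assert (0 <= - ac * s * (- ac * s) + bc * c * (bc * c)) by nra.
      replace (sqrt (1 + g²) * D * (sqrt (1 + g²) * D)) with
        ((sqrt (1 + g²) * sqrt (1 + g²)) * (D * D)) by ring.
      rewrite !sqrt_sqrt; auto.
      rewrite Hg. replace ((1 + ((ac - bc) * s * c / D)²) * (D * D)) with
        (D * D + ((ac - bc) * s * c) * ((ac - bc) * s * c)) by (unfold Rsqr; field; lra).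
      unfold D. transitivity ((bc * bc * (c * c) + ac * ac * (s * s)) * (s * s + c * c)); [ring|].
      rewrite SC. ring. }
  assert (Hpos : sqrt (1 + g²) > 0).
  { apply sqrt_lt_R0. pose proof (Rle_0_sqr g). lra. }
  unfold Psi. fold g.
  replace (PI / 2 + u + atan g) with (PI / 2 + (u + atan g)) by ring.
  repeat first [rewrite cos_PI2 | rewrite sin_PI2 | rewrite cos_plus | rewrite sin_plus | rewrite cos_atan | rewrite sin_atan].
  fold s c. rewrite <- Hsq.
  assert (K1 : (s + c * g) * D = ac * s).
  { rewrite Hg. field_simplify; [|lra]. unfold D.
    transitivity (ac * s * (s * s + c * c)); [ring| rewrite SC; ring]. }
  assert (K2 : (c - s * g) * D = bc * c).
  { rewrite Hg. field_simplify; [|lra]. unfold D.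
    transitivity (bc * c * (s * s + c * c)); [ring| rewrite SC; ring]. }
  set (r := sqrt (1 + g²)) in *. clearbody s c D g r.
  split.
  - transitivity (- ((s + c * g) * D)); [field; lra| rewrite K1; ring].
  - transitivity ((c - s * g) * D); [field; lra| exact K2].
Qed.

Lemma sin_minus_PI_aux : forall a, - sin (a - PI) = sin a.
Proof. intros. replace a with ((a - PI) + PI) at 2 by ring. rewrite neg_sin. ring. Qed.

Lemma Rmult_le_0_l_neg_aux : forall a b, a <= 0 -> b > 0 -> a * b <= 0.
Proof. intros. nra. Qed.

Lemma pnorm_scale : forall l X, pnorm (pscale l X) = Rabs l * pnorm X.
Proof.
  intros l [x y]. unfold pnorm, dot, pscale. cbn [fst snd].
  replace (l * x * (l * x) + l * y * (l * y)) with ((l * l) * (x * x + y * y)) by ring.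
  rewrite sqrt_mult_alt; [|nra]. f_equal. rewrite <- sqrt_Rsqr_abs. auto.
Qed.

Lemma angle_T : forall ac bc u v l1 l2 th, ac > 0 -> bc > 0 -> l1 * l2 > 0 ->
  signed_angle (pscale l1 (Tv ac bc u)) (pscale l2 (Tv ac bc v)) th ->
  cos th * (pnorm (Tv ac bc u) * pnorm (Tv ac bc v)) = dot (Tv ac bc u) (Tv ac bc v) /\
  sin th * (pnorm (Tv ac bc u) * pnorm (Tv ac bc v)) = ac * bc * sin (v - u).
Proof.
  intros ac bc u v l1 l2 th Ha Hb Hl [R [C S]].
  rewrite !pnorm_scale in C, S.
  assert (Habs : Rabs l1 * Rabs l2 = l1 * l2).
  { rewrite <- Rabs_mult. apply Rabs_right. lra. }
  unfold dot, cross, pscale, Tv in *. cbn [fst snd] in *.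
  split.
  - apply (Rmult_eq_reg_l (l1 * l2)); [|lra].
    rewrite <- Habs at 1. transitivity (cos th * (Rabs l1 * pnorm (- ac * sin u, bc * cos u) * (Rabs l2 * pnorm (- ac * sin v, bc * cos v)))); [ring|].
    rewrite C. ring.
  - apply (Rmult_eq_reg_l (l1 * l2)); [|lra].
    rewrite <- Habs at 1. transitivity (sin th * (Rabs l1 * pnorm (- ac * sin u, bc * cos u) * (Rabs l2 * pnorm (- ac * sin v, bc * cos v)))); [ring|].
    rewrite S, sin_minus. ring.
Qed.

Lemma theta_eq : forall ac bc u v l1 l2 th, ac > 0 -> bc > 0 -> l1 * l2 > 0 ->
  signed_angle (pscale l1 (Tv ac bc u)) (pscale l2 (Tv ac bc v)) th ->
  0 < v - u < PI -> th = Psi ac bc v - Psi ac bc u.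
Proof.
  intros ac bc u v l1 l2 th Ha Hb Hl HS Rvu.
  pose proof HS as [R _].
  destruct (angle_T ac bc u v l1 l2 th Ha Hb Hl HS) as [C S].
  pose proof (pnorm_Tv_pos ac bc u Ha Hb) as Nu. pose proof (pnorm_Tv_pos ac bc v Ha Hb) as Nv.
  destruct (Psi_cs ac bc u Ha Hb) as [Cu Su]. destruct (Psi_cs ac bc v Ha Hb) as [Cv Sv].
  set (d := Psi ac bc v - Psi ac bc u).
  assert (Cd : cos d * (pnorm (Tv ac bc u) * pnorm (Tv ac bc v)) = dot (Tv ac bc u) (Tv ac bc v)).
  { unfold d. rewrite cos_minus.
    transitivity ((cos (Psi ac bc v) * pnorm (Tv ac bc v)) * (cos (Psi ac bc u) * pnorm (Tv ac bc u)) +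
                  (sin (Psi ac bc v) * pnorm (Tv ac bc v)) * (sin (Psi ac bc u) * pnorm (Tv ac bc u))); [ring|].
    rewrite Cu, Su, Cv, Sv. unfold dot, Tv. cbn [fst snd]. ring. }
  assert (Sd : sin d * (pnorm (Tv ac bc u) * pnorm (Tv ac bc v)) = ac * bc * sin (v - u)).
  { unfold d. rewrite sin_minus, (sin_minus v u).
    transitivity ((sin (Psi ac bc v) * pnorm (Tv ac bc v)) * (cos (Psi ac bc u) * pnorm (Tv ac bc u)) -
                  (cos (Psi ac bc v) * pnorm (Tv ac bc v)) * (sin (Psi ac bc u) * pnorm (Tv ac bc u))); [ring|].
    rewrite Cu, Su, Cv, Sv. ring. }
  assert (NN : pnorm (Tv ac bc u) * pnorm (Tv ac bc v) > 0) by nra.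
  assert (E1 : cos th = cos d) by (apply (Rmult_eq_reg_r (pnorm (Tv ac bc u) * pnorm (Tv ac bc v))); lra).
  assert (E2 : sin th = sin d) by (apply (Rmult_eq_reg_r (pnorm (Tv ac bc u) * pnorm (Tv ac bc v))); lra).
  assert (Spos : sin (v - u) > 0) by (apply sin_gt_0; lra).
  assert (P3 : ac * bc * sin (v - u) > 0) by (apply Rmult_lt_0_compat; [nra| lra]).
  assert (sin d > 0).
  { rewrite <- E2. destruct (Rle_or_lt (sin th) 0) as [L|L]; auto.
    assert (sin th * (pnorm (Tv ac bc u) * pnorm (Tv ac bc v)) <= 0).
    { apply Rmult_le_0_l_neg_aux; lra. }
    lra. }
  assert (Rd : v - u - PI < d < v - u + PI).
  { unfold d, Psi. pose proof (atan_bound (gg ac bc u)). pose proof (atan_bound (gg ac bc v)). lra. }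
  assert (d <= PI).
  { destruct (Rle_or_lt d PI) as [L|L]; auto. exfalso.
    assert (sin d = - sin (d - PI)) by (rewrite sin_minus_PI_aux; ring).
    assert (sin (d - PI) > 0) by (apply sin_gt_0; lra). lra. }
  apply ang_eq; auto; lra.
Qed.

Lemma theta_neg : forall ac bc u v l1 l2 th, ac > 0 -> bc > 0 -> l1 * l2 > 0 ->
  signed_angle (pscale l1 (Tv ac bc u)) (pscale l2 (Tv ac bc v)) th ->
  sin (v - u) < 0 -> th < 0.
Proof.
  intros ac bc u v l1 l2 th Ha Hb Hl HS Sn.
  pose proof HS as [R _].
  destruct (angle_T ac bc u v l1 l2 th Ha Hb Hl HS) as [_ S].
  pose proof (pnorm_Tv_pos ac bc u Ha Hb) as Nu. pose proof (pnorm_Tv_pos ac bc v Ha Hb) as Nv.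
  assert (P3 : ac * bc * sin (v - u) < 0).
  { assert (ac * bc > 0) by nra. nra. }
  destruct (Rlt_or_le th 0) as [L|L]; auto. exfalso.
  assert (0 <= sin th) by (apply sin_ge_0; lra).
  assert (0 <= sin th * (pnorm (Tv ac bc u) * pnorm (Tv ac bc v))) by (apply Rmult_le_pos; nra).
  lra.
Qed.

Lemma edge_pure : forall ae be ac bc t t' s, ac > 0 -> bc > 0 ->
  FF (ae / ac) (be / bc) t s = 1 -> FF (ae / ac) (be / bc) t' s = 1 ->
  psub (ae * cos t', be * sin t') (ae * cos t, be * sin t) =
  pscale (ae * be * sin (t' - t) / (ac * bc)) (Tv ac bc s).
Proof.
  intros ae be ac bc t t' s Ha Hb E1 E2. unfold FF, psub, pscale, Tv in *. cbn [fst snd].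
  rewrite sin_minus.
  assert (Pn : (ae * cos t) * (cos s / ac) + (be * sin t) * (sin s / bc) = 1).
  { rewrite <- E1. field. lra. }
  assert (En : (ae * cos t' - ae * cos t) * (cos s / ac) + (be * sin t' - be * sin t) * (sin s / bc) = 0).
  { transitivity ((ae / ac * cos t' * cos s + be / bc * sin t' * sin s) - (ae / ac * cos t * cos s + be / bc * sin t * sin s)).
    - field. lra.
    - rewrite E1, E2. ring. }
  assert (Cr : ae * be * (sin t' * cos t - cos t' * sin t) = (ae * cos t) * (be * sin t' - be * sin t) - (be * sin t) * (ae * cos t' - ae * cos t)) by ring.
  set (ex := ae * cos t' - ae * cos t) in *. set (ey := be * sin t' - be * sin t) in *.
  set (px := ae * cos t) in *. set (py := be * sin t) in *.
  rewrite Cr. clearbody px py ex ey.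
  f_equal.
  - apply (Rmult_eq_reg_l (ac * bc)); [|nra].
    transitivity ((ac * bc * (px * (cos s / ac) + py * (sin s / bc))) * ex); [rewrite Pn; ring|].
    transitivity ((ac * bc * (ex * (cos s / ac) + ey * (sin s / bc))) * px + (px * ey - py * ex) * (- ac * sin s)).
    + field. lra.
    + rewrite En. field. lra.
  - apply (Rmult_eq_reg_l (ac * bc)); [|nra].
    transitivity ((ac * bc * (px * (cos s / ac) + py * (sin s / bc))) * ey); [rewrite Pn; ring|].
    transitivity ((ac * bc * (ex * (cos s / ac) + ey * (sin s / bc))) * py + (px * ey - py * ex) * (bc * cos s)).
    + field. lra.
    + rewrite En. field. lra.
Qed.

Definition zc (t s : nat -> R) (k : nat) : R := if Nat.even k then t (Nat.div2 k) else s (Nat.div2 k).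

Lemma zc_even : forall t s i, zc t s (2 * i) = t i.
Proof. intros. unfold zc. rewrite Nat.even_even, Nat.div2_double. auto. Qed.

Lemma zc_odd : forall t s i, zc t s (S (2 * i)) = s i.
Proof. intros. unfold zc. replace (S (2 * i)) with (2 * i + 1)%nat by lia.
  rewrite Nat.even_odd, Nat.div2_odd'. auto. Qed.

Lemma zc_cases : forall k, (exists i, k = 2 * i)%nat \/ (exists i, k = S (2 * i))%nat.
Proof. intros k. destruct (Nat.Even_or_Odd k) as [[i H]|[i H]]; [left|right]; exists i; lia. Qed.

Lemma zc_C1 : forall A B t s, (forall i, FF A B (t i) (s i) = 1) -> (forall i, FF A B (t (S i)) (s i) = 1) ->
  forall k, FF A B (zc t s k) (zc t s (S k)) = 1.
Proof.
  intros A B t s F1 F2 k. destruct (zc_cases k) as [[i ->]|[i ->]].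
  - rewrite zc_even, zc_odd. auto.
  - replace (S (S (2 * i))) with (2 * S i)%nat by lia. rewrite zc_even, zc_odd, FF_sym. auto.
Qed.

Lemma zc_C2 : forall t s,
  (forall i, ~ (cos (t i) = cos (t (S i)) /\ sin (t i) = sin (t (S i)))) ->
  (forall i, ~ (cos (s i) = cos (s (S i)) /\ sin (s i) = sin (s (S i)))) ->
  forall k, ~ (cos (zc t s k) = cos (zc t s (S (S k))) /\ sin (zc t s k) = sin (zc t s (S (S k)))).
Proof.
  intros t s D1 D2 k. destruct (zc_cases k) as [[i ->]|[i ->]].
  - replace (S (S (2 * i))) with (2 * S i)%nat by lia. rewrite !zc_even. auto.
  - replace (S (S (S (2 * i)))) with (S (2 * S i))%nat by lia. rewrite !zc_odd. auto.
Qed.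

Lemma zc_per : forall t s N, (forall i, t (i + N)%nat = t i) -> (forall i, s (i + N)%nat = s i) ->
  forall k, zc t s (k + 2 * N) = zc t s k.
Proof.
  intros t s N Ht Hs k. destruct (zc_cases k) as [[i ->]|[i ->]].
  - replace (2 * i + 2 * N)%nat with (2 * (i + N))%nat by lia. rewrite !zc_even. auto.
  - replace (S (2 * i) + 2 * N)%nat with (S (2 * (i + N)))%nat by lia. rewrite !zc_odd. auto.
Qed.

Lemma sin_two : forall A B z, A > 1 -> B > 1 -> (forall k, FF A B (z k) (z (S k)) = 1) ->
  (forall k, sin (z (S k) - z k) > 0) -> forall k, sin (z (S (S k)) - z k) > 0.
Proof.
  intros A B z HA HB C1 Hp k.
  destruct (lift_cong z k) as [c1 s1]. destruct (lift_cong z (S (S k))) as [c2 s2].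
  rewrite <- (sin_diff_ext (lift z k) (lift z (S (S k)))); auto.
  pose proof (lift_step z Hp k). pose proof (lift_step z Hp (S k)).
  pose proof (lift_two A B z HA HB C1 Hp k).
  apply sin_gt_0; lra.
Qed.

Lemma telescope : forall (f : nat -> R) (g : nat -> R), (forall k, g k = f (S k) - f k) ->
  forall n, sum_f_R0 g n = f (S n) - f O.
Proof.
  intros f g H n. induction n as [|n IH]; simpl.
  - rewrite H. ring.
  - rewrite IH, H. ring.
Qed.

Lemma sum_neg : forall (g : nat -> R) n, (forall k, (k <= n)%nat -> g k < 0) -> sum_f_R0 g n < 0.
Proof.
  intros g n H. induction n as [|n IH]; simpl.
  - apply H. lia.
  - assert (sum_f_R0 g n < 0) by (apply IH; intros; apply H; lia).
    assert (g (S n) < 0) by (apply H; lia). lra.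
Qed.

Lemma nrm_nz : forall a b Q, a > 0 -> b > 0 -> on_ellipse a b Q -> nrm a b Q <> (0, 0).
Proof.
  intros a b [x y] Ha Hb H E. unfold nrm, on_ellipse in *. cbn [fst snd] in *.
  injection E as E1 E2.
  assert (x = 0). { apply (Rmult_eq_reg_r (/ a ^ 2)); [rewrite Rmult_0_l; exact E1| apply Rinv_neq_0_compat; apply pow_nonzero; lra]. }
  assert (y = 0). { apply (Rmult_eq_reg_r (/ b ^ 2)); [rewrite Rmult_0_l; exact E2| apply Rinv_neq_0_compat; apply pow_nonzero; lra]. }
  subst. rewrite pow_i in H by lia. unfold Rdiv in H. rewrite !Rmult_0_l in H. lra.
Qed.

Lemma per_mult : forall (X : Type) (f : Z -> X) (N : Z), (forall j, f (j + N)%Z = f j) ->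
  forall (q : nat) j, f (j + Z.of_nat q * N)%Z = f j.
Proof.
  intros X f N H q. induction q as [|q IH]; intro j.
  - f_equal. lia.
  - replace (j + Z.of_nat (S q) * N)%Z with ((j + Z.of_nat q * N) + N)%Z by lia.
    rewrite H. apply IH.
Qed.

Lemma Z_rep : forall (i N : Z), (N >= 1)%Z -> exists q m : nat, (i + Z.of_nat q * N = Z.of_nat m)%Z.
Proof.
  intros i N HN. destruct (Z_le_gt_dec 0 i).
  - exists O, (Z.to_nat i). rewrite Z2Nat.id by lia. lia.
  - exists (Z.to_nat (- i)), (Z.to_nat (i + (- i) * N)).
    rewrite !Z2Nat.id by nia. lia.
Qed.

Lemma Tv_ext : forall ac bc a b, cos a = cos b -> sin a = sin b -> Tv ac bc a = Tv ac bc b.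
Proof. intros. unfold Tv. rewrite H, H0. auto. Qed.

Lemma Psi_diff : forall ac bc a b, cos a = cos b -> sin a = sin b -> Psi ac bc a - Psi ac bc b = a - b.
Proof. intros. unfold Psi, gg. rewrite H, H0. ring. Qed.

Theorem corollary4p2
  (ac bc ke ae be : R) (N tau : nat) (P Q : Z -> pt)
  (hac : ac > bc) (hbc : bc > 0) (hke : ke > 0)
  (hae : ae > 0) (hbe : be > 0)
  (hae2 : ae ^ 2 = ac ^ 2 + ke) (hbe2 : be ^ 2 = bc ^ 2 + ke)
  (hbil : billiard ae be ac bc P)
  (hper : least_period P N)
  (htau : turning_number P N tau)
  (hQ : forall i : Z, contact_point ac bc (P i) (P (i + 1)%Z) (Q i)) :
  let P' := fun i : Z => alpha ae be ac bc (Q i) in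
  ((Nat.Even N -> Nat.Odd tau ->
      forall i : Z, P (i + Z.of_nat (N / 2))%Z = popp (P i)) /\
   (forall n : nat, N = (2 * n + 1)%nat -> Nat.Odd tau ->
      forall i : Z, P' (i + Z.of_nat n)%Z = popp (P i)) /\
   (forall n : nat, N = (2 * n + 1)%nat -> Nat.Even tau ->
      forall i : Z, P i = P' (i + Z.of_nat n)%Z)).
Proof.
  intros P'.
  assert (Hac0 : ac > 0) by lra.
  assert (Hae1 : ae > ac).
  { destruct (Rlt_or_le ac ae) as [L|L]; auto. exfalso. assert (ae ^ 2 <= ac ^ 2) by (simpl; nra). lra. }
  assert (Hbe1 : be > bc).
  { destruct (Rlt_or_le bc be) as [L|L]; auto. exfalso. assert (be ^ 2 <= bc ^ 2) by (simpl; nra). lra. }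
  set (A := ae / ac). set (B := be / bc).
  assert (HA : A > 1).
  { unfold A. apply (Rmult_lt_reg_r ac); auto. unfold Rdiv. rewrite Rmult_assoc, Rinv_l; lra. }
  assert (HB : B > 1).
  { unfold B. apply (Rmult_lt_reg_r bc); auto. unfold Rdiv. rewrite Rmult_assoc, Rinv_l; lra. }
  destruct hper as [HN [Hpp _]].
  pose (t := fun i : Z => angle_of (fst (P i) / ae) (snd (P i) / be)).
  pose (s := fun i : Z => angle_of (fst (Q i) / ac) (snd (Q i) / bc)).
  assert (HPt : forall i, P i = (ae * cos (t i), be * sin (t i))).
  { intro i. exact (ell_param ae be (P i) hae hbe (proj1 (hbil i))). }
  assert (HQs : forall i, Q i = (ac * cos (s i), bc * sin (s i))).
  { intro i. exact (ell_param ac bc (Q i) Hac0 hbc (proj1 (hQ i))). }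
  assert (FFi : forall i, FF A B (t i) (s i) = 1 /\ FF A B (t (i+1)%Z) (s i) = 1).
  { intro i. destruct (contact_dot ac bc _ _ _ Hac0 hbc (hQ i)) as [D1 D2].
    rewrite (HPt i), (HQs i) in D1. rewrite (HPt (i+1)%Z), (HQs i) in D2.
    unfold dot, nrm, FF, A, B in *. cbn [fst snd] in *. split.
    - rewrite <- D1. field. lra.
    - rewrite <- D2. field. lra. }
  assert (Qper : forall i, Q (i + Z.of_nat N)%Z = Q i).
  { intro i. apply (contact_unique ac bc (P i) (P (i + 1)%Z)); auto.
    - pose proof (hQ (i + Z.of_nat N)%Z) as H. rewrite Hpp in H.
      replace (i + Z.of_nat N + 1)%Z with (i + 1 + Z.of_nat N)%Z in H by ring. rewrite Hpp in H. exact H. }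
  pose (tn := fun k : nat => t (Z.of_nat k)).
  pose (sn := fun k : nat => s (Z.of_nat k)).
  assert (tper : forall k, tn (k + N)%nat = tn k).
  { intro k. unfold tn, t. rewrite Nat2Z.inj_add, Hpp. reflexivity. }
  assert (sper : forall k, sn (k + N)%nat = sn k).
  { intro k. unfold sn, s. rewrite Nat2Z.inj_add, Qper. reflexivity. }
  assert (ZS : forall k, Z.of_nat (S k) = (Z.of_nat k + 1)%Z) by (intro; lia).
  assert (D1 : forall i, ~ (cos (tn i) = cos (tn (S i)) /\ sin (tn i) = sin (tn (S i)))).
  { intros i [C S]. apply (proj1 (proj2 (hbil (Z.of_nat i)))).
    rewrite (HPt (Z.of_nat i + 1)%Z), (HPt (Z.of_nat i)).
    unfold tn in C, S. rewrite ZS in C, S. rewrite <- C, <- S. reflexivity. }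
  assert (D2 : forall i, ~ (cos (sn i) = cos (sn (S i)) /\ sin (sn i) = sin (sn (S i)))).
  { intros i [C S]. set (j := Z.of_nat i).
    assert (EQ : Q (j + 1)%Z = Q j).
    { rewrite (HQs (j+1)%Z), (HQs j). unfold sn in C, S. rewrite ZS in C, S. fold j in C, S.
      rewrite <- C, <- S. reflexivity. }
    apply (proj2 (proj2 (proj2 (hbil (j + 1)%Z)))).
    replace (j + 1 - 1)%Z with j by ring.
    intro X.
    destruct (contact_dot ac bc _ _ _ Hac0 hbc (hQ j)) as [a1 a2].
    destruct (contact_dot ac bc _ _ _ Hac0 hbc (hQ (j+1)%Z)) as [b1 b2].
    rewrite EQ in b1, b2.
    assert (nz : nrm ac bc (Q j) <> (0,0)) by (apply nrm_nz; auto; apply (hQ j)).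
    assert (ne1 : P j <> P (j + 1)%Z) by (intro E; apply (proj1 (proj2 (hbil j))); auto).
    assert (ne2 : P (j + 1)%Z <> P (j + 1 + 1)%Z) by (intro E; apply (proj1 (proj2 (hbil (j+1)%Z))); auto).
    rewrite (line_eq _ _ _ X ne1 a1 a2 nz), (line_eq _ _ _ X ne2 a2 b2 nz). tauto. }
  pose (z := zc tn sn).
  assert (C1 : forall k, FF A B (z k) (z (S k)) = 1).
  { apply zc_C1.
    - intro i. apply (FFi (Z.of_nat i)).
    - intro i. unfold tn, sn. rewrite ZS. apply (FFi (Z.of_nat i)). }
  assert (C2 : forall k, ~ (cos (z k) = cos (z (S (S k))) /\ sin (z k) = sin (z (S (S k))))).
  { apply zc_C2; auto. }
  assert (zper : forall k, z (k + 2 * N)%nat = z k) by (apply zc_per; auto).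
  pose (lam := fun j : nat => ae * be * sin (tn (S j) - tn j) / (ac * bc)).
  assert (Edge : forall j : nat, psub (P (Z.of_nat j + 1)%Z) (P (Z.of_nat j)) = pscale (lam j) (Tv ac bc (sn j))).
  { intro j. rewrite (HPt (Z.of_nat j + 1)%Z), (HPt (Z.of_nat j)). unfold lam, tn, sn. rewrite ZS.
    apply edge_pure; auto; apply FFi. }
  destruct htau as [theta [Hext Hsum]].
  assert (HT : forall k : nat, signed_angle (pscale (lam k) (Tv ac bc (sn k)))
                 (pscale (lam (S k)) (Tv ac bc (sn (S k)))) (theta (Z.of_nat k + 1)%Z)).
  { intro k. pose proof (Hext (Z.of_nat k + 1)%Z) as H.
    replace (Z.of_nat k + 1 - 1)%Z with (Z.of_nat k) in H by ring.
    pose proof (Edge (S k)) as E2. rewrite ZS in E2.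
    rewrite (Edge k), E2 in H. exact H. }
  assert (z2 : forall i, z (2 * i)%nat = tn i) by (intro; apply zc_even).
  assert (z21 : forall i, z (S (2 * i))%nat = sn i) by (intro; apply zc_odd).
  assert (Nz : sin (z 1%nat - z 0%nat) <> 0) by (apply (FF_sin_nz A B); auto).
  assert (N1 : (1 <= N)%nat) by lia.
  destruct (Rtotal_order (sin (z 1%nat - z 0%nat)) 0) as [Neg|[Zr|Pos]]; [|contradiction|].
  -
    exfalso.
    pose (w := fun k => - z k).
    assert (C1w : forall k, FF A B (w k) (w (S k)) = 1) by (intro k; unfold w; rewrite FF_neg; auto).
    assert (C2w : forall k, ~ (cos (w k) = cos (w (S (S k))) /\ sin (w k) = sin (w (S (S k))))).
    { intros k [c1 c2]. apply (C2 k). unfold w in c1, c2. rewrite !cos_neg in c1. rewrite !sin_neg in c2. split; lra. }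
    assert (Hpw : forall k, sin (w (S k) - w k) > 0).
    { apply (propagate A B); auto. unfold w. replace (- z 1%nat - - z 0%nat) with (- (z 1%nat - z 0%nat)) by ring.
      rewrite sin_neg. lra. }
    pose proof (sin_two A B w HA HB C1w Hpw) as S2.
    assert (S2z : forall k, sin (z (S (S k)) - z k) < 0).
    { intro k. specialize (S2 k). unfold w in S2. replace (- z (S (S k)) - - z k) with (- (z (S (S k)) - z k)) in S2 by ring.
      rewrite sin_neg in S2. lra. }
    assert (Lneg : forall j, lam j < 0).
    { intro j. unfold lam. specialize (S2z (2 * j)%nat). replace (S (S (2 * j))) with (2 * S j)%nat in S2z by lia.
      rewrite !z2 in S2z. unfold Rdiv. assert (ae * be > 0) by nra. assert (/ (ac * bc) > 0) by (apply Rinv_0_lt_compat; nra).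
      set (v := sin (tn (S j) - tn j)) in *. set (r := / (ac * bc)) in *.
      assert (ae * be * v < 0) by nra. nra. }
    assert (Th : forall k, theta (Z.of_nat k + 1)%Z < 0).
    { intro k. apply (theta_neg ac bc (sn k) (sn (S k)) (lam k) (lam (S k))); auto.
      - pose proof (Lneg k); pose proof (Lneg (S k)); nra.
      - specialize (S2z (S (2 * k))). replace (S (S (S (2 * k)))) with (S (2 * S k)) in S2z by lia.
        rewrite !z21 in S2z. exact S2z. }
    assert (sum_f_R0 (fun k => theta (Z.of_nat k + 1)%Z) (N - 1) < 0) by (apply sum_neg; auto).
    assert (0 <= 2 * INR tau * PI).
    { pose proof PI_RGT_0. pose proof (pos_INR tau). nra. }
    lra.
  -
    assert (Hp : forall k, sin (z (S k) - z k) > 0) by (apply (propagate A B); auto).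
    pose (x := lift z).
    assert (Xc : forall k, cos (x k) = cos (z k) /\ sin (x k) = sin (z k)) by (intro; apply lift_cong).
    assert (Xs : forall k, x k < x (S k) < x k + PI) by (apply lift_step; auto).
    assert (X2 : forall k, x (S (S k)) < x k + PI) by (apply (lift_two A B); auto).
    assert (Xf : forall k, FF A B (x k) (x (S k)) = 1) by (apply lift_FF; auto).
    pose proof (sin_two A B z HA HB C1 Hp) as S2z.
    assert (Lpos : forall j, lam j > 0).
    { intro j. unfold lam. specialize (S2z (2 * j)%nat). replace (S (S (2 * j))) with (2 * S j)%nat in S2z by lia.
      rewrite !z2 in S2z. unfold Rdiv. assert (ae * be > 0) by nra. assert (/ (ac * bc) > 0) by (apply Rinv_0_lt_compat; nra).
      set (v := sin (tn (S j) - tn j)) in *. set (r := / (ac * bc)) in *.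
      assert (ae * be * v > 0) by nra. nra. }
    pose (f := fun k : nat => Psi ac bc (x (S (2 * k)))).
    assert (Th : forall k, theta (Z.of_nat k + 1)%Z = f (S k) - f k).
    { intro k. unfold f.
      destruct (Xc (S (2 * k))) as [c1 s1]. destruct (Xc (S (2 * S k))) as [c2 s2].
      rewrite z21 in c1, s1, c2, s2.
      apply (theta_eq ac bc _ _ (lam k) (lam (S k))); auto.
      - pose proof (Lpos k); pose proof (Lpos (S k)); nra.
      - rewrite (Tv_ext ac bc (x (S (2 * k))) (sn k)), (Tv_ext ac bc (x (S (2 * S k))) (sn (S k))); auto.
      - replace (S (2 * S k)) with (S (S (S (2 * k)))) by lia.
        pose proof (Xs (S (2 * k))). pose proof (Xs (S (S (2 * k)))). pose proof (X2 (S (2 * k))). lra. }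
    assert (Sum : f N - f O = 2 * INR tau * PI).
    { rewrite <- Hsum. rewrite (telescope f _ Th). f_equal. f_equal. lia. }
    assert (Wn : x (S (2 * N)) - x 1%nat = 2 * INR tau * PI).
    { rewrite <- Sum. unfold f. rewrite Nat.mul_0_r. symmetry. apply Psi_diff.
      - destruct (Xc (S (2 * N))) as [c1 _]. destruct (Xc 1%nat) as [c2 _]. rewrite c1, c2.
        replace (S (2 * N)) with (1 + 2 * N)%nat by lia. rewrite zper. auto.
      - destruct (Xc (S (2 * N))) as [_ c1]. destruct (Xc 1%nat) as [_ c2]. rewrite c1, c2.
        replace (S (2 * N)) with (1 + 2 * N)%nat by lia. rewrite zper. auto. }
    pose proof (lift_per z (2 * N) Hp zper) as LP. fold x in LP.
    assert (W : forall k, x (k + 2 * N)%nat = x k + 2 * INR tau * PI).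
    { intro k. rewrite LP. f_equal. specialize (LP 1%nat). replace (1 + 2 * N)%nat with (S (2 * N)) in LP by lia. lra. }
    assert (Half : forall i : nat, x (2 * i + N)%nat = x (2 * i)%nat + PI * INR tau).
    { intro i. pose (w := fun k => x (2 * i + k)%nat).
      replace (x (2 * i)%nat) with (w O) by (unfold w; f_equal; lia).
      change (w N = w O + PI * INR tau).
      apply (half A B w N (PI * INR tau)); auto.
      - intro k. unfold w. replace (2 * i + S k)%nat with (S (2 * i + k)) by lia. apply Xf.
      - intro k. unfold w. replace (2 * i + S k)%nat with (S (2 * i + k)) by lia. apply Xs.
      - intros a b. apply FF_shift_nat.
      - unfold w. rewrite W.
        replace (2 * i + 0)%nat with (2 * i)%nat by lia. ring. }
    assert (Key : forall i : nat, cos (z (2 * i + N)%nat) = cos (tn i + PI * INR tau) /\ sin (z (2 * i + N)%nat) = sin (tn i + PI * INR tau)).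
    { intro i. destruct (Xc (2 * i + N)%nat) as [c1 s1]. destruct (Xc (2 * i)%nat) as [c2 s2]. rewrite z2 in c2, s2.
      rewrite <- c1, <- s1, Half. rewrite !cos_plus, !sin_plus, c2, s2. auto. }
    assert (NZ : (Z.of_nat N >= 1)%Z) by lia.
    split; [|split].
    + intros [h Hh] Hodd i.
      replace (N / 2)%nat with h by (subst N; rewrite Nat.mul_comm, Nat.div_mul; lia).
      destruct (Z_rep i (Z.of_nat N) NZ) as [q [m Hm]].
      rewrite <- (per_mult _ P _ Hpp q (i + Z.of_nat h)), <- (per_mult _ P _ Hpp q i).
      replace (i + Z.of_nat h + Z.of_nat q * Z.of_nat N)%Z with (Z.of_nat (m + h)) by lia.
      rewrite Hm. rewrite (HPt (Z.of_nat (m + h))), (HPt (Z.of_nat m)).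
      destruct (Key m) as [c1 s1]. replace (2 * m + N)%nat with (2 * (m + h))%nat in c1, s1 by lia.
      rewrite z2 in c1, s1. destruct (cs_odd (tn m) tau Hodd) as [c2 s2].
      rewrite c2 in c1. rewrite s2 in s1. unfold tn in c1, s1. unfold popp. cbn [fst snd].
      rewrite c1, s1. f_equal; ring.
    + intros n Hn Hodd i. unfold P', alpha.
      destruct (Z_rep i (Z.of_nat N) NZ) as [q [m Hm]].
      rewrite <- (per_mult _ Q _ Qper q (i + Z.of_nat n)), <- (per_mult _ P _ Hpp q i).
      replace (i + Z.of_nat n + Z.of_nat q * Z.of_nat N)%Z with (Z.of_nat (m + n)) by lia.
      rewrite Hm. rewrite (HQs (Z.of_nat (m + n))), (HPt (Z.of_nat m)).
      destruct (Key m) as [c1 s1]. replace (2 * m + N)%nat with (S (2 * (m + n)))%nat in c1, s1 by lia.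
      rewrite z21 in c1, s1. destruct (cs_odd (tn m) tau Hodd) as [c2 s2].
      rewrite c2 in c1. rewrite s2 in s1. unfold tn, sn in c1, s1. unfold popp. cbn [fst snd].
      rewrite c1, s1. f_equal; field; lra.
    + intros n Hn Hev i. unfold P', alpha.
      destruct (Z_rep i (Z.of_nat N) NZ) as [q [m Hm]].
      rewrite <- (per_mult _ Q _ Qper q (i + Z.of_nat n)), <- (per_mult _ P _ Hpp q i).
      replace (i + Z.of_nat n + Z.of_nat q * Z.of_nat N)%Z with (Z.of_nat (m + n)) by lia.
      rewrite Hm. rewrite (HQs (Z.of_nat (m + n))), (HPt (Z.of_nat m)).
      destruct (Key m) as [c1 s1]. replace (2 * m + N)%nat with (S (2 * (m + n)))%nat in c1, s1 by lia.
      rewrite z21 in c1, s1. destruct (cs_even (tn m) tau Hev) as [c2 s2].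
      rewrite c2 in c1. rewrite s2 in s1. unfold tn, sn in c1, s1. cbn [fst snd].
      rewrite c1, s1. f_equal; field; lra.
Qed.
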